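(* The cut rule is admissible in the cut-free fragment of BIS4: for all bunches $\Delta$, bunched contexts $\Gamma(-)$ and formulas $\psi,\varphi$ of BIS4, if $\Delta\vdash_{\mathsf{cf}}\psi$ and $\Gamma(\psi)\vdash_{\mathsf{cf}}\varphi$, then $\Gamma(\Delta)\vdash_{\mathsf{cf}}\varphi$.
   Context: Formulas of BIS4: $\varphi,\psi ::= \top \mid \bot \mid \varphi\wedge\psi \mid \varphi\vee\psi \mid \varphi\to\psi \mid \mathsf{emp} \mid \varphi\ast\psi \mid \varphi -\!\!\ast\, \psi \mid \Box\varphi \mid a$, where $a$ ranges over a fixed set $\mathrm{Atom}$. Bunches are finite binary trees whose leaves are formulas or one of two empty bunches $\varnothing_m,\varnothing_a$, and whose internal nodes are labelled either by the multiplicative comma ($\Delta_1 \mathbin{,} \Delta_2$) or the additive semicolon ($\Delta_1 \mathbin{;} \Delta_2$). A bunched context $\Delta(-)$ is a bunch with exactly one leaf replaced by a hole; $\Delta(\Gamma)$ is the result of filling the hole with $\Gamma$. Bunch equivalence $\equiv$ is the least equivalence relation such that $\mathbin{,}$ is commutative and associative with unit $\varnothing_m$, $\mathbin{;}$ is commutative and associative with unit $\varnothing_a$, and $\Delta\equiv\Delta'$ implies $\Gamma(\Delta)\equiv\Gamma(\Delta')$. For a bunch $\Delta$, $\Box\Delta$ is the bunch obtained by replacing every formula leaf $\chi$ of $\Delta$ by $\Box\chi$ (empty bunches and node labels unchanged). The BIS4 sequent calculus has the rules: (ax) $a\vdash a$ for $a\in\mathrm{Atom}$; (equiv) from $\Delta'\vdash\varphi$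 and $\Delta\equiv\Delta'$ infer $\Delta\vdash\varphi$; (W;) from $\Delta(\Delta_1)\vdash\varphi$ infer $\Delta(\Delta_1\mathbin{;}\Delta_2)\vdash\varphi$; (C;) from $\Delta(\Delta_1\mathbin{;}\Delta_1)\vdash\varphi$ infer $\Delta(\Delta_1)\vdash\varphi$; (cut) from $\Delta'\vdash A$ and $\Delta(A)\vdash B$ infer $\Delta(\Delta')\vdash B$; (empR) $\varnothing_m\vdash\mathsf{emp}$; (empL) from $\Delta(\varnothing_m)\vdash\varphi$ infer $\Delta(\mathsf{emp})\vdash\varphi$; ($\ast$R) from $\Delta_1\vdash\varphi$, $\Delta_2\vdash\psi$ infer $\Delta_1\mathbin{,}\Delta_2\vdash\varphi\ast\psi$; ($\ast$L) from $\Delta(\varphi\mathbin{,}\psi)\vdash\chi$ infer $\Delta(\varphi\ast\psi)\vdash\chi$; ($-\!\ast$R) from $\Delta\mathbin{,}\varphi\vdash\psi$ infer $\Delta\vdash\varphi-\!\!\ast\,\psi$; ($-\!\ast$L) from $\Delta_1\vdash\varphi$ and $\Delta(\Delta_2\mathbin{,}\psi)\vdash\chi$ infer $\Delta((\Delta_1\mathbin{,}\Delta_2)\mathbin{,}(\varphi-\!\!\ast\,\psi))\vdash\chi$; ($\top$R) $\varnothing_a\vdash\top$; ($\top$L) from $\Delta(\varnothing_a)\vdash\varphi$ infer $\Delta(\top)\vdash\varphi$; ($\wedge$R) from $\Delta_1\vdash\varphi$, $\Delta_2\vdash\psi$ infer $\Delta_1\mathbin{;}\Delta_2\vdash\varphi\wedge\psi$;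 ($\wedge$L) from $\Delta(\varphi\mathbin{;}\psi)\vdash\chi$ infer $\Delta(\varphi\wedge\psi)\vdash\chi$; ($\to$R) from $\Delta\mathbin{;}\varphi\vdash\psi$ infer $\Delta\vdash\varphi\to\psi$; ($\to$L) from $\Delta_1\vdash\varphi$ and $\Delta(\Delta_2\mathbin{;}\psi)\vdash\chi$ infer $\Delta((\Delta_1\mathbin{;}\Delta_2)\mathbin{;}(\varphi\to\psi))\vdash\chi$; ($\bot$L) $\Delta(\bot)\vdash\varphi$; ($\vee$R1),($\vee$R2) from $\Delta\vdash\varphi$ (resp. $\Delta\vdash\psi$) infer $\Delta\vdash\varphi\vee\psi$; ($\vee$L) from $\Delta(\varphi)\vdash\chi$ and $\Delta(\psi)\vdash\chi$ infer $\Delta(\varphi\vee\psi)\vdash\chi$; ($\Box$R) from $\Box\Delta\vdash A$ infer $\Box\Delta\vdash\Box A$; ($\Box$L) from $\Delta(A)\vdash B$ infer $\Delta(\Box A)\vdash B$. $\Delta\vdash_{\mathsf{cf}}\varphi$ means $\Delta\vdash\varphi$ is derivable in BIS4 without the (cut) rule. *)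

(* Defs.v *)
From Stdlib Require Import Bool.

Set Implicit Arguments.

Section BIS4.
Variable Atom : Type.

Inductive formula : Type :=
| FTop | FBot
| FAnd (p q : formula) | FOr (p q : formula) | FImp (p q : formula)
| FEmp | FStar (p q : formula) | FWand (p q : formula)
| FBox (p : formula)
| FAtom (a : Atom).

Inductive bunch : Type :=
| BForm (p : formula)
| BEmpM
| BEmpA
| BComma (d1 d2 : bunch)
| BSemi (d1 d2 : bunch).

Inductive ctx : Type :=
| CHole
| CCommaL (c : ctx) (d : bunch)
| CCommaR (d : bunch) (c : ctx)
| CSemiL (c : ctx) (d : bunch)
| CSemiR (d : bunch) (c : ctx).

Fixpoint fill (c : ctx) (g : bunch) : bunch :=
  match c with
  | CHole => g
  | CCommaL c d => BComma (fill c g) d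
  | CCommaR d c => BComma d (fill c g)
  | CSemiL c d => BSemi (fill c g) d
  | CSemiR d c => BSemi d (fill c g)
  end.

Inductive bequiv : bunch -> bunch -> Prop :=
| beq_refl d : bequiv d d
| beq_sym d1 d2 : bequiv d1 d2 -> bequiv d2 d1
| beq_trans d1 d2 d3 : bequiv d1 d2 -> bequiv d2 d3 -> bequiv d1 d3
| beq_comma_comm d1 d2 : bequiv (BComma d1 d2) (BComma d2 d1)
| beq_comma_assoc d1 d2 d3 :
    bequiv (BComma d1 (BComma d2 d3)) (BComma (BComma d1 d2) d3)
| beq_comma_unit d : bequiv (BComma d BEmpM) d
| beq_semi_comm d1 d2 : bequiv (BSemi d1 d2) (BSemi d2 d1)
| beq_semi_assoc d1 d2 d3 :
    bequiv (BSemi d1 (BSemi d2 d3)) (BSemi (BSemi d1 d2) d3)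
| beq_semi_unit d : bequiv (BSemi d BEmpA) d
| beq_ctx (c : ctx) d1 d2 : bequiv d1 d2 -> bequiv (fill c d1) (fill c d2).

Fixpoint bbox (d : bunch) : bunch :=
  match d with
  | BForm p => BForm (FBox p)
  | BEmpM => BEmpM
  | BEmpA => BEmpA
  | BComma d1 d2 => BComma (bbox d1) (bbox d2)
  | BSemi d1 d2 => BSemi (bbox d1) (bbox d2)
  end.

(* The BIS4 sequent calculus; [cut_ok = false] gives the cut-free system. *)
Inductive deriv (cut_ok : bool) : bunch -> formula -> Prop :=
| d_ax a : deriv cut_ok (BForm (FAtom a)) (FAtom a)
| d_equiv d d' p : deriv cut_ok d' p -> bequiv d d' -> deriv cut_ok d p
| d_weak (c : ctx) d1 d2 p :
    deriv cut_ok (fill c d1) p -> deriv cut_ok (fill c (BSemi d1 d2)) p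
| d_contr (c : ctx) d1 p :
    deriv cut_ok (fill c (BSemi d1 d1)) p -> deriv cut_ok (fill c d1) p
| d_cut (c : ctx) d' a b :
    cut_ok = true ->
    deriv cut_ok d' a -> deriv cut_ok (fill c (BForm a)) b ->
    deriv cut_ok (fill c d') b
| d_empR : deriv cut_ok BEmpM FEmp
| d_empL (c : ctx) p :
    deriv cut_ok (fill c BEmpM) p -> deriv cut_ok (fill c (BForm FEmp)) p
| d_starR d1 d2 p q :
    deriv cut_ok d1 p -> deriv cut_ok d2 q ->
    deriv cut_ok (BComma d1 d2) (FStar p q)
| d_starL (c : ctx) p q r :
    deriv cut_ok (fill c (BComma (BForm p) (BForm q))) r ->
    deriv cut_ok (fill c (BForm (FStar p q))) r
| d_wandR d p q :
    deriv cut_ok (BComma d (BForm p)) q -> deriv cut_ok d (FWand p q)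
| d_wandL (c : ctx) d1 d2 p q r :
    deriv cut_ok d1 p -> deriv cut_ok (fill c (BComma d2 (BForm q))) r ->
    deriv cut_ok (fill c (BComma (BComma d1 d2) (BForm (FWand p q)))) r
| d_topR : deriv cut_ok BEmpA FTop
| d_topL (c : ctx) p :
    deriv cut_ok (fill c BEmpA) p -> deriv cut_ok (fill c (BForm FTop)) p
| d_andR d1 d2 p q :
    deriv cut_ok d1 p -> deriv cut_ok d2 q ->
    deriv cut_ok (BSemi d1 d2) (FAnd p q)
| d_andL (c : ctx) p q r :
    deriv cut_ok (fill c (BSemi (BForm p) (BForm q))) r ->
    deriv cut_ok (fill c (BForm (FAnd p q))) r
| d_impR d p q :
    deriv cut_ok (BSemi d (BForm p)) q -> deriv cut_ok d (FImp p q)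
| d_impL (c : ctx) d1 d2 p q r :
    deriv cut_ok d1 p -> deriv cut_ok (fill c (BSemi d2 (BForm q))) r ->
    deriv cut_ok (fill c (BSemi (BSemi d1 d2) (BForm (FImp p q)))) r
| d_botL (c : ctx) p : deriv cut_ok (fill c (BForm FBot)) p
| d_orR1 d p q : deriv cut_ok d p -> deriv cut_ok d (FOr p q)
| d_orR2 d p q : deriv cut_ok d q -> deriv cut_ok d (FOr p q)
| d_orL (c : ctx) p q r :
    deriv cut_ok (fill c (BForm p)) r -> deriv cut_ok (fill c (BForm q)) r ->
    deriv cut_ok (fill c (BForm (FOr p q))) r
| d_boxR d a :
    deriv cut_ok (bbox d) a -> deriv cut_ok (bbox d) (FBox a)
| d_boxL (c : ctx) a b :
    deriv cut_ok (fill c (BForm a)) b -> deriv cut_ok (fill c (BForm (FBox a))) b.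

Definition deriv_cf (d : bunch) (p : formula) : Prop := deriv false d p.

End BIS4.

(* Main.v *)
Require Import Defs.

#[local] Arguments CHole {Atom}.
#[local] Arguments BEmpM {Atom}.
#[local] Arguments BEmpA {Atom}.
#[local] Arguments FTop {Atom}.
#[local] Arguments FBot {Atom}.
#[local] Arguments FEmp {Atom}.

Section S.
Variable A : Type.
Notation F := (formula A).
Notation B := (bunch A).
Notation C := (ctx A).
Notation dv := (deriv false).

Fixpoint ccomp (G c : C) : C :=
  match G with
  | CHole => c
  | CCommaL G' d => CCommaL (ccomp G' c) d
  | CCommaR d G' => CCommaR d (ccomp G' c)
  | CSemiL G' d => CSemiL (ccomp G' c) d
  | CSemiR d G' => CSemiR d (ccomp G' c)
  end.

Lemma fill_comp G c x : fill (ccomp G c) x = fill G (fill c x).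
Proof. induction G; simpl; congruence. Qed.

Inductive rep (psi : F) (D : B) : B -> B -> Prop :=
| rep_keep p : rep psi D (BForm p) (BForm p)
| rep_sub : rep psi D (BForm psi) D
| rep_m : rep psi D BEmpM BEmpM
| rep_a : rep psi D BEmpA BEmpA
| rep_comma a b a' b' : rep psi D a a' -> rep psi D b b' -> rep psi D (BComma a b) (BComma a' b')
| rep_semi a b a' b' : rep psi D a a' -> rep psi D b b' -> rep psi D (BSemi a b) (BSemi a' b').

Inductive repc (psi : F) (D : B) : C -> C -> Prop :=
| rc_hole : repc psi D CHole CHole
| rc_cl c c' d d' : repc psi D c c' -> rep psi D d d' -> repc psi D (CCommaL c d) (CCommaL c' d')
| rc_cr c c' d d' : repc psi D c c' -> rep psi D d d' -> repc psi D (CCommaR d c) (CCommaR d' c')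
| rc_sl c c' d d' : repc psi D c c' -> rep psi D d d' -> repc psi D (CSemiL c d) (CSemiL c' d')
| rc_sr c c' d d' : repc psi D c c' -> rep psi D d d' -> repc psi D (CSemiR d c) (CSemiR d' c').

Lemma rep_refl psi D b : rep psi D b b.
Proof. induction b; constructor; auto. Qed.

Lemma repc_refl psi D c : repc psi D c c.
Proof. induction c; constructor; auto using rep_refl. Qed.

Lemma rep_fill psi D c c' b b' : repc psi D c c' -> rep psi D b b' -> rep psi D (fill c b) (fill c' b').
Proof. induction 1; simpl; intros; try constructor; auto. Qed.

Lemma rep_one psi D G : rep psi D (fill G (BForm psi)) (fill G D).
Proof. apply rep_fill. apply repc_refl. constructor. Qed.

Lemma rep_comma_inv psi D a b X : rep psi D (BComma a b) X ->
  exists a' b', X = BComma a' b' /\ rep psi D a a' /\ rep psi D b b'.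
Proof. inversion 1; eauto. Qed.
Lemma rep_semi_inv psi D a b X : rep psi D (BSemi a b) X ->
  exists a' b', X = BSemi a' b' /\ rep psi D a a' /\ rep psi D b b'.
Proof. inversion 1; eauto. Qed.
Lemma rep_m_inv psi D X : rep psi D BEmpM X -> X = BEmpM.
Proof. inversion 1; auto. Qed.
Lemma rep_a_inv psi D X : rep psi D BEmpA X -> X = BEmpA.
Proof. inversion 1; auto. Qed.
Lemma rep_form_inv psi D p X : rep psi D (BForm p) X -> X = BForm p \/ (psi = p /\ X = D).
Proof. inversion 1; auto. Qed.
Arguments rep_form_inv {psi D p X}.

Lemma rep_fill_inv psi D c b X : rep psi D (fill c b) X ->
  exists c' b', X = fill c' b' /\ repc psi D c c' /\ rep psi D b b'.
Proof.
  revert X; induction c; simpl; intros X H.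
  - exists CHole, X; simpl; repeat split; auto. constructor.
  - apply rep_comma_inv in H as (a'&b'&->&H1&H2).
    destruct (IHc _ H1) as (c'&x&->&?&?). exists (CCommaL c' b'), x; simpl; repeat split; auto; constructor; auto.
  - apply rep_comma_inv in H as (a'&b'&->&H1&H2).
    destruct (IHc _ H2) as (c'&x&->&?&?). exists (CCommaR a' c'), x; simpl; repeat split; auto; constructor; auto.
  - apply rep_semi_inv in H as (a'&b'&->&H1&H2).
    destruct (IHc _ H1) as (c'&x&->&?&?). exists (CSemiL c' b'), x; simpl; repeat split; auto; constructor; auto.
  - apply rep_semi_inv in H as (a'&b'&->&H1&H2).
    destruct (IHc _ H2) as (c'&x&->&?&?). exists (CSemiR a' c'), x; simpl; repeat split; auto; constructor; auto.
Qed.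

Ltac decomp := repeat match goal with
| H : rep _ _ (fill _ _) _ |- _ => apply rep_fill_inv in H as (?&?&?&?&?); subst
| H : rep _ _ (BComma _ _) _ |- _ => apply rep_comma_inv in H as (?&?&?&?&?); subst
| H : rep _ _ (BSemi _ _) _ |- _ => apply rep_semi_inv in H as (?&?&?&?&?); subst
| H : rep _ _ BEmpM _ |- _ => apply rep_m_inv in H; subst
| H : rep _ _ BEmpA _ |- _ => apply rep_a_inv in H; subst
end.

Lemma rep_equiv psi D d1 d2 : bequiv d1 d2 ->
  (forall X, rep psi D d1 X -> exists Y, rep psi D d2 Y /\ bequiv X Y) /\
  (forall Y, rep psi D d2 Y -> exists X, rep psi D d1 X /\ bequiv X Y).
Proof.
  induction 1.
  - split; intros; eexists; split; eauto; constructor.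
  - destruct IHbequiv as [H1 H2]; split; intros Z HZ;
      [destruct (H2 _ HZ) as (W&?&?) | destruct (H1 _ HZ) as (W&?&?)];
      exists W; split; auto; apply beq_sym; auto.
  - destruct IHbequiv1 as [a1 a2], IHbequiv2 as [b1 b2]. split.
    + intros X HX; destruct (a1 X HX) as (Y&HY&E1); destruct (b1 Y HY) as (Z&HZ&E2);
      exists Z; split; auto; eapply beq_trans; eauto.
    + intros Z HZ; destruct (b2 Z HZ) as (Y&HY&E2); destruct (a2 Y HY) as (X&HX&E1);
      exists X; split; auto; eapply beq_trans; eauto.
  - split; intros X HX; decomp; eexists; split;
      [repeat constructor; eauto | apply beq_comma_comm | repeat constructor; eauto | apply beq_comma_comm].
  - split; intros X HX; decomp; eexists; split;
      [repeat constructor; eauto | apply beq_comma_assoc | repeat constructor; eauto | apply beq_comma_assoc].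
  - split; intros X HX; decomp.
    + eexists; split; [eauto | apply beq_comma_unit].
    + exists (BComma X BEmpM); split; [repeat constructor; auto | apply beq_comma_unit].
  - split; intros X HX; decomp; eexists; split;
      [repeat constructor; eauto | apply beq_semi_comm | repeat constructor; eauto | apply beq_semi_comm].
  - split; intros X HX; decomp; eexists; split;
      [repeat constructor; eauto | apply beq_semi_assoc | repeat constructor; eauto | apply beq_semi_assoc].
  - split; intros X HX; decomp.
    + eexists; split; [eauto | apply beq_semi_unit].
    + exists (BSemi X BEmpA); split; [repeat constructor; auto | apply beq_semi_unit].
  - destruct IHbequiv as [H1 H2]; split; intros X HX; decomp.
    + destruct (H1 _ H4) as (y&?&?). exists (fill x y); split.
      * apply rep_fill; auto.
      * apply beq_ctx; auto.
    + destruct (H2 _ H4) as (y&?&?). exists (fill x y); split.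
      * apply rep_fill; auto.
      * apply beq_ctx; auto.
Qed.

Lemma rep_bbox_nobox psi D d X : rep psi D (bbox d) X -> (forall a, psi <> FBox a) -> X = bbox d.
Proof.
  revert X; induction d; simpl; intros X H Hn; decomp; auto.
  - destruct (rep_form_inv H) as [-> | [E _]]; auto. exfalso; eapply Hn; eauto.
  - f_equal; auto.
  - f_equal; auto.
Qed.

Arguments rep_bbox_nobox {psi D d X}.

Lemma rep_bbox psi e d X : rep psi (bbox e) (bbox d) X -> exists d', X = bbox d'.
Proof.
  revert X; induction d; simpl; intros X H; decomp.
  - destruct (rep_form_inv H) as [-> | [_ ->]]. exists (BForm p); auto. exists e; auto.
  - exists BEmpM; auto.
  - exists BEmpA; auto.
  - destruct (IHd1 _ H0) as (?&->), (IHd2 _ H1) as (?&->). eexists (BComma _ _); simpl; eauto.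
  - destruct (IHd1 _ H0) as (?&->), (IHd2 _ H1) as (?&->). eexists (BSemi _ _); simpl; eauto.
Qed.

Section Gen.
Variable psi : F.
Variable D : B.
Hypothesis Hax : forall a, psi = FAtom a -> dv D (FAtom a).
Hypothesis HboxR : forall d X a, rep psi D (bbox d) X -> dv X a -> dv X (FBox a).
Hypothesis HempL : psi = FEmp -> forall c r, dv (fill c BEmpM) r -> dv (fill c D) r.
Hypothesis HtopL : psi = FTop -> forall c r, dv (fill c BEmpA) r -> dv (fill c D) r.
Hypothesis HstarL : forall p q, psi = FStar p q -> forall c r,
  dv (fill c (BComma (BForm p) (BForm q))) r -> dv (fill c D) r.
Hypothesis HandL : forall p q, psi = FAnd p q -> forall c r,
  dv (fill c (BSemi (BForm p) (BForm q))) r -> dv (fill c D) r.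
Hypothesis HwandL : forall p q, psi = FWand p q -> forall c d1 d2 r, dv d1 p ->
  dv (fill c (BComma d2 (BForm q))) r -> dv (fill c (BComma (BComma d1 d2) D)) r.
Hypothesis HimpL : forall p q, psi = FImp p q -> forall c d1 d2 r, dv d1 p ->
  dv (fill c (BSemi d2 (BForm q))) r -> dv (fill c (BSemi (BSemi d1 d2) D)) r.
Hypothesis HbotL : psi = FBot -> forall c r, dv (fill c D) r.
Hypothesis HorL : forall p q, psi = FOr p q -> forall c r,
  dv (fill c (BForm p)) r -> dv (fill c (BForm q)) r -> dv (fill c D) r.
Hypothesis HboxL : forall a, psi = FBox a -> forall c r,
  dv (fill c (BForm a)) r -> dv (fill c D) r.

Lemma gen Bn phi : dv Bn phi -> forall X, rep psi D Bn X -> dv X phi.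
Proof.
  induction 1; intros X HX; decomp;
  repeat match goal with H : rep _ _ (BForm _) _ |- _ =>
    destruct (rep_form_inv H) as [-> | [?E ->]]; clear H end.
  - apply d_ax.
  - auto.
  - destruct (proj1 (rep_equiv psi D d d' H0) X HX) as (Y&HY&E).
    exact (d_equiv (IHderiv Y HY) E).
  - apply d_weak, IHderiv, rep_fill; auto.
  - apply d_contr, IHderiv, rep_fill; auto; constructor; auto.
  - discriminate.
  - apply d_empR.
  - apply d_empL, IHderiv, rep_fill; auto; constructor.
  - apply HempL; auto. apply IHderiv, rep_fill; auto; constructor.
  - apply d_starR; auto.
  - apply d_starL, IHderiv, rep_fill; auto; apply rep_refl.
  - eapply HstarL; eauto. apply IHderiv, rep_fill; auto; apply rep_refl.
  - apply d_wandR, IHderiv; constructor; auto; constructor.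
  - apply d_wandL; auto. apply IHderiv2, rep_fill; auto; repeat constructor; auto.
  - eapply HwandL; eauto. apply IHderiv2, rep_fill; auto; repeat constructor; auto.
  - apply d_topR.
  - apply d_topL, IHderiv, rep_fill; auto; constructor.
  - apply HtopL; auto. apply IHderiv, rep_fill; auto; constructor.
  - apply d_andR; auto.
  - apply d_andL, IHderiv, rep_fill; auto; apply rep_refl.
  - eapply HandL; eauto. apply IHderiv, rep_fill; auto; apply rep_refl.
  - apply d_impR, IHderiv; constructor; auto; constructor.
  - apply d_impL; auto. apply IHderiv2, rep_fill; auto; repeat constructor; auto.
  - eapply HimpL; eauto. apply IHderiv2, rep_fill; auto; repeat constructor; auto.
  - apply d_botL.
  - apply HbotL; auto.
  - apply d_orR1; auto.
  - apply d_orR2; auto.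
  - apply d_orL; [apply IHderiv1 | apply IHderiv2]; apply rep_fill; auto; constructor.
  - eapply HorL; eauto; [apply IHderiv1 | apply IHderiv2]; apply rep_fill; auto; constructor.
  - eapply HboxR; eauto.
  - apply d_boxL, IHderiv, rep_fill; auto; constructor.
  - eapply HboxL; eauto. apply IHderiv, rep_fill; auto; constructor.
Qed.
End Gen.

Definition Cut (x : F) := forall D, dv D x -> forall G r,
  dv (fill G (BForm x)) r -> dv (fill G D) r.

Definition subs_ok (x : F) : Prop :=
  match x with
  | FAnd p q | FOr p q | FImp p q | FStar p q | FWand p q => Cut p /\ Cut q
  | FBox a => Cut a
  | _ => True
  end.

Ltac vac := first [ intros; discriminate
  | (let d0 := fresh in let X0 := fresh in let a0 := fresh in
     let HR := fresh in let Hd := fresh in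
     intros d0 X0 a0 HR Hd;
     assert (X0 = bbox d0) by (apply (rep_bbox_nobox HR); intros ? ?; discriminate);
     subst; apply d_boxR; assumption) ].

Lemma inner D x : dv D x -> subs_ok x -> forall G r,
  dv (fill G (BForm x)) r -> dv (fill G D) r.
Proof.
  induction 1; intros Hs G r0 Hr; simpl in Hs.
  - exact Hr.
  - apply (d_equiv (d' := fill G d')); [auto | apply beq_ctx; auto].
  - rewrite <- fill_comp; apply d_weak; rewrite fill_comp; auto.
  - rewrite <- fill_comp; apply d_contr; rewrite fill_comp; auto.
  - discriminate.
  -
    apply (gen FEmp BEmpM) with (Bn := fill G (BForm FEmp)); try vac;
      [ | exact Hr | apply rep_one]. auto.
  - rewrite <- fill_comp; apply d_empL; rewrite fill_comp; auto.
  -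
    destruct Hs as [Cp Cq].
    assert (H1 : dv (fill G (BComma (BForm p) (BForm q))) r0).
    { apply (gen (FStar p q) (BComma (BForm p) (BForm q))) with (Bn := fill G (BForm (FStar p q))); try vac;
        [ | exact Hr | apply rep_one].
      intros p' q' E; injection E as <- <-; auto. }
    assert (H2 := Cp d1 H (ccomp G (CCommaL CHole (BForm q))) r0).
    rewrite !fill_comp in H2; simpl in H2.
    assert (H3 := Cq d2 H0 (ccomp G (CCommaR d1 CHole)) r0).
    rewrite !fill_comp in H3; simpl in H3. auto.
  - rewrite <- fill_comp; apply d_starL; rewrite fill_comp; auto.
  -
    destruct Hs as [Cp Cq].
    apply (gen (FWand p q) d) with (Bn := fill G (BForm (FWand p q))); try vac;
      [ | exact Hr | apply rep_one].
    intros p' q' E; injection E as <- <-.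
    intros c d1 d2 r Hd1 Hd2.
    assert (H2 := Cp d1 Hd1 (CCommaR d CHole) q H); simpl in H2.
    assert (H3 := Cq _ H2 (ccomp c (CCommaR d2 CHole)) r).
    rewrite !fill_comp in H3; simpl in H3.
    apply (d_equiv (H3 Hd2)). apply beq_ctx.
    eapply beq_trans; [apply beq_comma_comm|].
    eapply beq_trans; [apply beq_comma_assoc|].
    apply beq_comma_comm.
  - rewrite <- fill_comp; eapply d_wandL; eauto; rewrite fill_comp; auto.
  -
    apply (gen FTop BEmpA) with (Bn := fill G (BForm FTop)); try vac;
      [ | exact Hr | apply rep_one]. auto.
  - rewrite <- fill_comp; apply d_topL; rewrite fill_comp; auto.
  -
    destruct Hs as [Cp Cq].
    assert (H1 : dv (fill G (BSemi (BForm p) (BForm q))) r0).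
    { apply (gen (FAnd p q) (BSemi (BForm p) (BForm q))) with (Bn := fill G (BForm (FAnd p q))); try vac;
        [ | exact Hr | apply rep_one].
      intros p' q' E; injection E as <- <-; auto. }
    assert (H2 := Cp d1 H (ccomp G (CSemiL CHole (BForm q))) r0).
    rewrite !fill_comp in H2; simpl in H2.
    assert (H3 := Cq d2 H0 (ccomp G (CSemiR d1 CHole)) r0).
    rewrite !fill_comp in H3; simpl in H3. auto.
  - rewrite <- fill_comp; apply d_andL; rewrite fill_comp; auto.
  -
    destruct Hs as [Cp Cq].
    apply (gen (FImp p q) d) with (Bn := fill G (BForm (FImp p q))); try vac;
      [ | exact Hr | apply rep_one].
    intros p' q' E; injection E as <- <-.
    intros c d1 d2 r Hd1 Hd2.
    assert (H2 := Cp d1 Hd1 (CSemiR d CHole) q H); simpl in H2.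
    assert (H3 := Cq _ H2 (ccomp c (CSemiR d2 CHole)) r).
    rewrite !fill_comp in H3; simpl in H3.
    apply (d_equiv (H3 Hd2)). apply beq_ctx.
    eapply beq_trans; [apply beq_semi_comm|].
    eapply beq_trans; [apply beq_semi_assoc|].
    apply beq_semi_comm.
  - rewrite <- fill_comp; eapply d_impL; eauto; rewrite fill_comp; auto.
  - rewrite <- fill_comp; apply d_botL.
  -
    apply (gen (FOr p q) d) with (Bn := fill G (BForm (FOr p q))); try vac;
      [ | exact Hr | apply rep_one].
    intros p' q' E; injection E as <- <-; intros c r Hc _.
    destruct Hs as [Cp _]; exact (Cp d H c r Hc).
  - apply (gen (FOr p q) d) with (Bn := fill G (BForm (FOr p q))); try vac;
      [ | exact Hr | apply rep_one].
    intros p' q' E; injection E as <- <-; intros c r _ Hc.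
    destruct Hs as [_ Cq]; exact (Cq d H c r Hc).
  - rewrite <- fill_comp; apply d_orL; rewrite fill_comp; auto.
  -
    apply (gen (FBox a) (bbox d)) with (Bn := fill G (BForm (FBox a))); try vac;
      [ | | exact Hr | apply rep_one].
    + intros d0 X a0 HR Hd. destruct (rep_bbox _ _ _ _ HR) as [d' ->]. apply d_boxR; auto.
    + intros a' E; injection E as <-; intros c r Hc. exact (Hs _ H c r Hc).
  - rewrite <- fill_comp; apply d_boxL; rewrite fill_comp; auto.
Qed.

Lemma cut_all : forall x, Cut x.
Proof.
  induction x; intros D HD; apply (inner _ _ HD); simpl; auto.
Qed.

End S.

Theorem theorem8p6 (Atom : Type) (D : bunch Atom) (G : ctx Atom)
    (psi phi : formula Atom) :
  deriv_cf D psi -> deriv_cf (fill G (BForm psi)) phi -> deriv_cf (fill G D) phi.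
Proof.
  intros H1 H2. exact (cut_all _ _ _ H1 G _ H2).
Qed.
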